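(* Suppose $z\in\mathbb{Z}[i]\setminus\{0\}$ is $2$-powerfully unitarily $t$-perfect in $\mathbb{Z}[i]$ for some integer $t\ge 2$, i.e. $I_2^*(z)=t$. Then we may write $z=(1+i)^{\gamma}x$ with $\gamma$ a nonnegative integer, $x\in\mathbb{Z}[i]$ and $N(x)=x\bar x$ odd. Moreover, $x$ has exactly $\gamma+\upsilon_2(t)$ pairwise nonassociated prime divisors, where $\upsilon_2(t)$ is the exponent of $2$ in $t$.
   Context: Work in the Gaussian integers $\mathbb{Z}[i]=\mathcal O_{\mathbb{Q}(\sqrt{-1})}$, a unique factorization domain. $|z|=\sqrt{z\bar z}$, $\arg(z)\in[0,2\pi)$. Let $A$ be the set of nonzero $z\in\mathbb{Z}[i]$ with $0\le \arg(z)<\pi/2$. Two elements are relatively prime if they have no nonunit common divisor. For nonzero $x,z$, write $x\Diamond z$ iff $x\in A$, $x\mid z$, and $x$ is relatively prime to $z/x$. For $m\in\mathbb{Z}$ define $\delta_m^*(z)=\sum_{x\Diamond z}|x|^m$ and $I_m^*(z)=\delta_m^*(z)/|z|^m$. *)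

(* Defs.v *)
(* Gaussian integers Z[i] represented as pairs (a,b) = a + b i. *)
From mathcomp Require Import all_boot all_order all_algebra.
From Stdlib Require ClassicalEpsilon.
Set Implicit Arguments. Unset Strict Implicit. Unset Printing Implicit Defensive.
Import Order.TTheory GRing.Theory Num.Theory.
Local Open Scope ring_scope.

Definition gauss := (int * int)%type.

Definition gauss0 : gauss := (0, 0).
Definition gauss1 : gauss := (1, 0).
Definition gaussD (x y : gauss) : gauss := (x.1 + y.1, x.2 + y.2).
Definition gaussM (x y : gauss) : gauss :=
  (x.1 * y.1 - x.2 * y.2, x.1 * y.2 + x.2 * y.1).
Definition gaussConj (x : gauss) : gauss := (x.1, - x.2).
Definition gaussN (x : gauss) : nat := absz (x.1 * x.1 + x.2 * x.2).
Definition gaussX (x : gauss) (n : nat) : gauss := iter n (gaussM x) gauss1.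
Definition one_plus_i : gauss := (1, 1).

Definition gdvd (x z : gauss) : Prop := exists y, z = gaussM x y.
Definition gunit (u : gauss) : Prop := exists v, gaussM u v = gauss1.
Definition gassoc (x y : gauss) : Prop := exists u, gunit u /\ x = gaussM u y.
Definition grelprime (x y : gauss) : Prop :=
  forall d, gdvd d x -> gdvd d y -> gunit d.
Definition gprime (p : gauss) : Prop :=
  p <> gauss0 /\ ~ gunit p /\ forall a b, gdvd p (gaussM a b) -> gdvd p a \/ gdvd p b.

(* A = nonzero z with 0 <= arg z < pi/2, i.e. Re z > 0 and Im z >= 0 *)
Definition inA (x : gauss) : Prop := 0 < x.1 /\ 0 <= x.2.

Definition diamond (x z : gauss) : Prop :=
  inA x /\ exists y, z = gaussM x y /\ grelprime x y.

Definition decP (P : Prop) : bool :=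
  if ClassicalEpsilon.excluded_middle_informative P then true else false.

(* For z <> 0 every
   x with x <> z satisfies x = (a,b), 0 < a, 0 <= b and N(x) <= N(z), so the
   sum over the box 0 <= a, b <= N(z) is the full (finite) sum. *)
Definition delta2star (z : gauss) : nat :=
  (\sum_(a < (gaussN z).+1) \sum_(b < (gaussN z).+1)
     (if decP (diamond ((a : nat)%:Z, (b : nat)%:Z) z)
      then gaussN ((a : nat)%:Z, (b : nat)%:Z) else 0%N))%N.

Definition I2star (z : gauss) : rat := (delta2star z)%:R / (gaussN z)%:R.

Definition num_prime_divisors (x : gauss) (k : nat) : Prop :=
  exists s : seq gauss,
    size s = k /\
    (forall p, p \in s -> gprime p /\ gdvd p x) /\
    (forall i j, (i < size s)%N -> (j < size s)%N -> i <> j ->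
        ~ gassoc (nth gauss0 s i) (nth gauss0 s j)) /\
    (forall p, gprime p -> gdvd p x -> exists2 q, q \in s & gassoc p q).

(* Main.v *)
Require Import Defs.
From mathcomp Require Import all_boot all_order all_algebra.
From mathcomp Require Import zify ring lra.
Set Implicit Arguments. Unset Strict Implicit. Unset Printing Implicit Defensive.
Import Order.TTheory GRing.Theory Num.Theory.
Local Open Scope ring_scope.

Ltac gr := rewrite /gaussM /gaussD /gauss1 /gauss0 /gaussConj /=; 
  try (apply: injective_projections => /=); ring.

Lemma gpair (x : gauss) : x = (x.1, x.2). Proof. by case: x. Qed.

Lemma gMA x y w : gaussM x (gaussM y w) = gaussM (gaussM x y) w. Proof. gr. Qed.
Lemma gMC x y : gaussM x y = gaussM y x. Proof. gr. Qed.
Lemma gM1 x : gaussM gauss1 x = x. Proof. rewrite [x]gpair; gr. Qed.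
Lemma gMr1 x : gaussM x gauss1 = x. Proof. rewrite [x]gpair; gr. Qed.

Definition Nz (x : gauss) : int := x.1 * x.1 + x.2 * x.2.
Lemma Nz_ge0 x : 0 <= Nz x. Proof. rewrite /Nz; nia. Qed.
Lemma gaussNE x : ((gaussN x)%:Z = Nz x)%R.
Proof. by rewrite /gaussN gez0_abs // -/(Nz x) Nz_ge0. Qed.
Lemma NzM x y : Nz (gaussM x y) = Nz x * Nz y. Proof. rewrite /Nz /gaussM /=; ring. Qed.
Lemma NM x y : gaussN (gaussM x y) = (gaussN x * gaussN y)%N.
Proof. apply/eqP; rewrite -eqz_nat PoszM !gaussNE NzM. by []. Qed.
Lemma Nz0 x : Nz x = 0 -> x = gauss0.
Proof. rewrite /Nz => H. have h1 : x.1 = 0 by nia. have h2 : x.2 = 0 by nia.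
  by rewrite [x]gpair h1 h2. Qed.
Lemma N0 x : gaussN x = 0%N -> x = gauss0.
Proof. move=> H; apply: Nz0; by rewrite -gaussNE H. Qed.
Lemma gM0 x : gaussM x gauss0 = gauss0. Proof. gr. Qed.

Lemma gsub_eq0 x y : gaussD x (gaussM (-1, 0) y) = gauss0 -> x = y.
Proof. rewrite /gaussD /gaussM /gauss0 /= => -[h1 h2].
  rewrite [x]gpair [y]gpair; congr pair; lia. Qed.

Lemma gcancel x y w : x <> gauss0 -> gaussM x y = gaussM x w -> y = w.
Proof.
move=> nx H. apply: gsub_eq0.
have : Nz x * Nz (gaussD y (gaussM (-1, 0) w)) = 0.
  rewrite -NzM. have -> : gaussM x (gaussD y (gaussM (-1, 0) w)) = gauss0.
    have E : gaussM x (gaussD y (gaussM (-1, 0) w)) = gaussD (gaussM x y) (gaussM (-1,0) (gaussM x w)) by gr.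
    rewrite E H; gr.
  by rewrite /Nz.
move/eqP; rewrite mulf_eq0 => /orP [/eqP/Nz0 //|/eqP/Nz0 //].
Qed.

Lemma gunitN u : gunit u <-> Nz u = 1.
Proof. split.
- case=> v H. have : (gaussN u * gaussN v = 1)%N by rewrite -NM H.
  move/eqP; rewrite muln_eq1 => /andP [/eqP H1 _]. by rewrite -gaussNE H1.
- move=> H; exists (gaussConj u); rewrite /gaussM /gaussConj /gauss1 /=.
  move: H; rewrite /Nz => H; congr pair; lia.
Qed.

Lemma gunit_cases u : gunit u ->
  u = (1,0) \/ u = (-1,0) \/ u = (0,1) \/ u = (0,-1).
Proof. move/gunitN; rewrite /Nz => H. rewrite [u]gpair.
have : (u.1 = 0 \/ u.1 = 1 \/ u.1 = -1) by nia.
have : (u.2 = 0 \/ u.2 = 1 \/ u.2 = -1) by nia.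
move=> [E2|[E2|E2]] [E1|[E1|E1]]; rewrite E1 E2 in H *; move: H => /= H; try (by left); try (by right; left); try (by right; right; left); try (by right; right; right); lia.
Qed.

Lemma gdvd_refl x : gdvd x x. Proof. by exists gauss1; rewrite gMr1. Qed.
Lemma gdvd_trans x y w : gdvd x y -> gdvd y w -> gdvd x w.
Proof. case=> a -> [b ->]; exists (gaussM a b); by rewrite gMA. Qed.
Lemma gdvd_mulr x y : gdvd x (gaussM x y). Proof. by exists y. Qed.
Lemma gdvd_mull x y : gdvd x (gaussM y x). Proof. by exists y; rewrite gMC. Qed.
Lemma gdvd_M x y a b : gdvd x y -> gdvd a b -> gdvd (gaussM x a) (gaussM y b).
Proof. case=> c -> [d ->]; exists (gaussM c d); gr. Qed.
Lemma gdvd_Mr x y w : gdvd x y -> gdvd x (gaussM y w).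
Proof. move=> H; apply: gdvd_trans H (gdvd_mulr _ _). Qed.
Lemma gdvd_Ml x y w : gdvd x y -> gdvd x (gaussM w y).
Proof. move=> H; apply: gdvd_trans H (gdvd_mull _ _). Qed.
Lemma gdvd_D x y w : gdvd x y -> gdvd x w -> gdvd x (gaussD y w).
Proof. case=> a -> [b ->]; exists (gaussD a b); gr. Qed.
Lemma gdvd1 x : gdvd x gauss1 -> gunit x.
Proof. case=> y H; by exists y. Qed.
Lemma gdvd_unit x u : gunit u -> gdvd x u -> gunit x.
Proof. case=> v Hv [y Hy]; exists (gaussM y v); by rewrite gMA -Hy. Qed.
Lemma gunit_dvd u x : gunit u -> gdvd u x.
Proof. case=> v Hv; exists (gaussM v x); by rewrite gMA Hv gM1. Qed.

Lemma gdvd_N x y : y <> gauss0 -> gdvd x y -> (gaussN x <= gaussN y)%N.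
Proof. move=> ny [c Hc]; rewrite Hc NM. rewrite leq_pmulr // lt0n; apply/eqP => /N0 E.
  by apply: ny; rewrite Hc E gM0. Qed.
Lemma gdvd_Ndvd x y : gdvd x y -> (gaussN x %| gaussN y)%N.
Proof. case=> c ->; rewrite NM; exact: dvdn_mulr. Qed.

Lemma gunit_N1 u : gunit u <-> gaussN u = 1%N.
Proof. rewrite gunitN -gaussNE; split; [move=> H; apply/eqP; by rewrite -eqz_nat H| by move=> ->]. Qed.

Lemma gassoc_sym x y : gassoc x y -> gassoc y x.
Proof. case=> u [[v Hv] ->]; exists v; split; first by exists u; rewrite gMC.
  by rewrite gMA (gMC v) Hv gM1. Qed.
Lemma gassoc_trans x y w : gassoc x y -> gassoc y w -> gassoc x w.
Proof. case=> u [/gunitN Hu ->] [v [/gunitN Hv ->]]; exists (gaussM u v); split; last by rewrite gMA.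
  by apply/gunitN; rewrite NzM Hu Hv. Qed.
Lemma gassoc_refl x : gassoc x x.
Proof. exists gauss1; split; [exists gauss1; gr|by rewrite gM1]. Qed.
Lemma gassoc_dvd x y : gassoc x y -> gdvd y x.
Proof. case=> u [_ ->]; exact: gdvd_mull. Qed.
Lemma gassoc_N x y : gassoc x y -> gaussN x = gaussN y.
Proof. case=> u [/gunit_N1 H ->]; by rewrite NM H mul1n. Qed.

Lemma round_int (c n : int) : 0 < n -> exists q, -n <= 2 * (c - n * q) < n.
Proof. move=> n0. exists ((2*c + n) %/ (2*n))%Z.
have E := divz_eq (2*c+n) (2*n).
have h1 : 0 <= ((2*c+n) %% (2*n))%Z by apply: modz_ge0; lia.
have h2 : ((2*c+n) %% (2*n))%Z < 2 * n by apply: ltz_pmod; lia.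
set q := ((2*c + n) %/ (2*n))%Z in E *. set m := ((2*c + n) %% (2*n))%Z in E h1 h2 *.
lia. Qed.

Lemma geuclid a b : b <> gauss0 -> exists q r, a = gaussD (gaussM q b) r /\ Nz r < Nz b.
Proof.
move=> nb. have n0 : 0 < Nz b.
  have := Nz_ge0 b; rewrite le0r => /orP[/eqP/Nz0 //|//].
set n := Nz b.
have [q1 Hq1] := round_int (a.1*b.1 + a.2*b.2) n0.
have [q2 Hq2] := round_int (a.2*b.1 - a.1*b.2) n0.
exists (q1, q2), (gaussD a (gaussM (-1,0) (gaussM (q1,q2) b))). split; first gr.
set e1 := (a.1*b.1 + a.2*b.2) - n * q1 in Hq1.
set e2 := (a.2*b.1 - a.1*b.2) - n * q2 in Hq2.
set r := gaussD _ _.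
have E : Nz r * n = e1 * e1 + e2 * e2.
  rewrite /Nz /r /e1 /e2 /n /Nz /gaussD /gaussM /=; ring.
have := Nz_ge0 r. nia.
Qed.

Definition glin (d a b : gauss) := exists u v, d = gaussD (gaussM u a) (gaussM v b).

Lemma gbezout_aux n a b : (gaussN b <= n)%N ->
  exists d, [/\ gdvd d a, gdvd d b & glin d a b].
Proof.
elim: n a b => [|n IH] a b Hb.
  have b0 : b = gauss0 by apply: N0; lia.
  exists a; split; [exact: gdvd_refl| by exists gauss0; rewrite b0 gM0 | ].
  by exists gauss1, gauss0; rewrite b0 gM1; gr.
case: (boolP (b == gauss0)) => [/eqP b0|/eqP nb].
  exists a; split; [exact: gdvd_refl| by exists gauss0; rewrite b0 gM0 | ].
  by exists gauss1, gauss0; rewrite b0 gM1; gr.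
have [q [r [Ea Hr]]] := geuclid a nb.
have Hr' : (gaussN r <= n)%N.
  have : (gaussN r < gaussN b)%N by rewrite -ltz_nat !gaussNE.
  lia.
have [d [d1 d2 [u [v Ed]]]] := IH b r Hr'.
exists d; split => //.
  by rewrite Ea; apply: gdvd_D => //; apply: gdvd_Ml.
exists v, (gaussD u (gaussM (-1,0) (gaussM v q))).
rewrite Ed Ea; gr.
Qed.

Lemma gbezout a b : exists d, [/\ gdvd d a, gdvd d b & glin d a b].
Proof. exact: (@gbezout_aux (gaussN b)). Qed.

Lemma relprimeP x y : grelprime x y <-> glin gauss1 x y.
Proof. split.
- move=> H. have [d [d1 d2 [u [v Ed]]]] := gbezout x y.
  have [w Hw] := H d d1 d2.
  exists (gaussM w u), (gaussM w v). rewrite -Hw gMC Ed; gr.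
- case=> u [v E] d [a Ha] [b Hb]. apply: gdvd1.
  rewrite E Ha Hb; exists (gaussD (gaussM u a) (gaussM v b)); gr.
Qed.

Lemma relprime_sym x y : grelprime x y -> grelprime y x.
Proof. move=> H d a b; exact: H. Qed.
Lemma relprime_dvdl x y d : grelprime x y -> gdvd d x -> grelprime d y.
Proof. move=> H dx c c1 c2; apply: H => //; exact: gdvd_trans dx. Qed.
Lemma relprime_dvdr x y d : grelprime x y -> gdvd d y -> grelprime x d.
Proof. move=> H dy c c1 c2; apply: H => //; exact: gdvd_trans dy. Qed.
Lemma relprime_Mr a b c : grelprime a b -> grelprime a c -> grelprime a (gaussM b c).
Proof. move=> /relprimeP [u [v E]] /relprimeP [u' [v' E']]; apply/relprimeP.
exists (gaussD (gaussM (gaussM u u') a) (gaussD (gaussM u (gaussM v' c)) (gaussM v (gaussM b u')))), (gaussM v v').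
have -> : gauss1 = gaussM gauss1 gauss1 by gr.
rewrite {1}E E'; gr. Qed.
Lemma relprime_Ml a b c : grelprime a c -> grelprime b c -> grelprime (gaussM a b) c.
Proof. move=> h1 h2; apply: relprime_sym; apply: relprime_Mr; exact: relprime_sym. Qed.
Lemma gauss_lemma a b c : grelprime a b -> gdvd a (gaussM b c) -> gdvd a c.
Proof. move=> /relprimeP [u [v E]] [w Hw].
exists (gaussD (gaussM c u) (gaussM v w)).
have -> : c = gaussM c gauss1 by rewrite gMr1.
rewrite {1}E. have : gaussM v (gaussM b c) = gaussM v (gaussM a w) by rewrite Hw.
move=> H. transitivity (gaussD (gaussM (gaussM c u) a) (gaussM v (gaussM b c))); first gr.
rewrite H; gr. Qed.
Lemma relprime_assoc x x' y : grelprime x y -> gassoc x' x -> grelprime x' y.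
Proof. move=> H /gassoc_sym /gassoc_dvd D; exact: relprime_dvdl D. Qed.
Lemma relprime1 x : grelprime gauss1 x.
Proof. move=> d d1 _; exact: gdvd1. Qed.

Lemma gX0 x : gaussX x 0 = gauss1. Proof. by []. Qed.
Lemma gXS x n : gaussX x n.+1 = gaussM x (gaussX x n). Proof. by []. Qed.
Lemma NX x n : gaussN (gaussX x n) = (gaussN x ^ n)%N.
Proof. elim: n => [|n IH]; first by rewrite gX0 /gaussN /= ; rewrite expn0.
  by rewrite gXS NM IH expnS. Qed.
Lemma gX_neq0 x n : x <> gauss0 -> gaussX x n <> gauss0.
Proof. move=> nx /(f_equal gaussN); rewrite NX /gaussN /= => /eqP; rewrite expn_eq0 => /andP [/eqP h _].
  by apply: nx; apply: N0. Qed.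

Definition girred p := [/\ p <> gauss0, ~ gunit p &
  forall c e, p = gaussM c e -> gunit c \/ gunit e].

Lemma irred_prime p : girred p -> gprime p.
Proof. case=> p0 pu Hp; do 2 (split => //); move=> a b Hab.
have [g [[h Hh] ga [u [v Eg]]]] := gbezout p a.
case: (Hp _ _ Hh) => [[w Hw]|[w Hw]].
- right. apply: (@gauss_lemma p a) => //. apply/relprimeP.
  exists (gaussM w u), (gaussM w v). rewrite -Hw gMC Eg; gr.
- left. apply: gdvd_trans ga. exists w. rewrite Hh -gMA Hw gMr1 //.
Qed.

Lemma gN_nonunit x : x <> gauss0 -> ~ gunit x -> (2 <= gaussN x)%N.
Proof. move=> x0 xu. have : gaussN x <> 0%N by move/N0.
  have : gaussN x <> 1%N by move/gunit_N1. lia. Qed.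

Lemma exists_prime_aux n z : (gaussN z <= n)%N -> z <> gauss0 -> ~ gunit z ->
  exists p, gprime p /\ gdvd p z.
Proof.
elim: n z => [|n IH] z Hz z0 zu; first by exfalso; apply: z0; apply: N0; lia.
case: (ClassicalEpsilon.excluded_middle_informative
   (exists c e, z = gaussM c e /\ ~ gunit c /\ ~ gunit e)).
- case=> c [e [E [cu eu]]].
  have c0 : c <> gauss0 by move=> c0; apply: z0; rewrite E c0 gMC gM0.
  have e0 : e <> gauss0 by move=> e0; apply: z0; rewrite E e0 gM0.
  have := gN_nonunit e0 eu. have : gaussN z = (gaussN c * gaussN e)%N by rewrite E NM.
  have := gN_nonunit c0 cu => h1 h2 h3.
  have [p [pp pc]] := IH c ltac:(nia) c0 cu.
  exists p; split => //; rewrite E; exact: gdvd_Mr.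
- move=> H; exists z; split; last exact: gdvd_refl.
  apply: irred_prime; split => // c e E.
  case: (ClassicalEpsilon.excluded_middle_informative (gunit c)) => cu; first by left.
  case: (ClassicalEpsilon.excluded_middle_informative (gunit e)) => eu; first by right.
  by exfalso; apply: H; exists c, e.
Qed.

Lemma exists_prime z : z <> gauss0 -> ~ gunit z -> exists p, gprime p /\ gdvd p z.
Proof. exact: (@exists_prime_aux (gaussN z)). Qed.

Lemma prime_dvd_X p x n : gprime p -> gdvd p (gaussX x n) -> gdvd p x.
Proof. case=> p0 [pu Hp]. elim: n => [|n IH]; first by move/gdvd1.
  rewrite gXS => /Hp [] //. Qed.

Lemma prime_dvd_prime p r : gprime p -> gprime r -> gdvd r p -> gassoc r p.
Proof. move=> [p0 [pu Hp]] [r0 [ru _]] [c Hc].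
have : gdvd p (gaussM r c) by rewrite -Hc; exact: gdvd_refl.
case/Hp => [[d Hd]|[d Hd]].
- exists d; split; last by rewrite gMC.
  exists c. apply: (@gcancel p) => //. rewrite gMr1.
  transitivity (gaussM (gaussM p d) c); first gr. by rewrite -Hd.
- exfalso; apply: ru. exists d. apply: (@gcancel p) => //. rewrite gMr1.
  transitivity (gaussM (gaussM p d) r); first gr. by rewrite -Hd gMC.
Qed.

Lemma prime_relprime p w e : gprime p -> ~ gdvd p w -> grelprime (gaussX p e) w.
Proof. move=> pp npw d d1 d2.
case: (ClassicalEpsilon.excluded_middle_informative (gunit d)) => // du; exfalso.
have w0 : w <> gauss0 by move=> w0; apply: npw; exists gauss0; rewrite w0 gM0.
have d0 : d <> gauss0 by move=> d0; apply: w0; case: d2 => y ->; rewrite d0 gMC gM0.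
have [r [rp rd]] := exists_prime d0 du.
have : gdvd r p by apply: prime_dvd_X rp (gdvd_trans rd d1).
move/(prime_dvd_prime pp rp)/gassoc_dvd => pr.
by apply: npw; apply: gdvd_trans pr (gdvd_trans rd d2).
Qed.

Lemma prime_N2 p : gprime p -> (2 <= gaussN p)%N.
Proof. case=> p0 [pu _]; exact: gN_nonunit. Qed.

Definition normA (x : gauss) : gauss :=
  if (0 < x.1) && (0 <= x.2) then x
  else if (0 < x.2) && (x.1 <= 0) then gaussM (0,-1) x
  else if (x.1 < 0) && (x.2 <= 0) then gaussM (-1,0) x
  else gaussM (0,1) x.

Lemma normA_inA x : x <> gauss0 -> inA (normA x).
Proof. move=> x0. have : ~ (x.1 = 0 /\ x.2 = 0) by case=> h1 h2; apply: x0; rewrite [x]gpair h1 h2.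
rewrite /normA /inA /gaussM /=.
case: ifP => [/andP [h1 h2]|/negbT H1]; first by split.
case: ifP => [/andP [h1 h2]|/negbT H2] /=; first (split; lia).
case: ifP => [/andP [h1 h2]|/negbT H3] /=; first (split; lia).
move: H1 H2 H3. rewrite !negb_and -!ltNge -!leNgt => H1 H2 H3 Hn.
case/orP: H1 => H1; case/orP: H2 => H2; case/orP: H3 => H3; split; lia.
Qed.

Lemma unit_i : gunit (0,1). Proof. by apply/gunitN. Qed.
Lemma unit_mi : gunit (0,-1). Proof. by apply/gunitN. Qed.
Lemma unit_m1 : gunit (-1,0). Proof. by apply/gunitN. Qed.
Lemma unit_1 : gunit gauss1. Proof. by apply/gunitN. Qed.

Lemma normA_assoc x : gassoc (normA x) x.
Proof. rewrite /normA.
case: ifP => _; first exact: gassoc_refl.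
case: ifP => _; first by exists (0,-1); split => //; exact: unit_mi.
case: ifP => _; first by exists (-1,0); split => //; exact: unit_m1.
by exists (0,1); split => //; exact: unit_i.
Qed.

Lemma normA_N x : gaussN (normA x) = gaussN x.
Proof. exact: gassoc_N (normA_assoc x). Qed.

Lemma inA_neq0 x : inA x -> x <> gauss0.
Proof. case=> h _ E; move: h; by rewrite E. Qed.

Lemma inA_assoc_eq x y : inA x -> inA y -> gassoc x y -> x = y.
Proof. move=> [h1 h2] [h3 h4] [u [/gunit_cases Hu E]].
move: h1 h2; rewrite E [y]gpair; rewrite [y]gpair in h3 h4.
case: Hu => [->|[->|[->|->]]]; rewrite /gaussM /= => h1 h2.
- congr pair; ring.
all: exfalso; move: h3 h4 => /= h3 h4; lia.
Qed.

Definition udiv x z := exists y, z = gaussM x y /\ grelprime x y.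

Lemma udiv_assoc x x' z : udiv x z -> gassoc x' x -> udiv x' z.
Proof. case=> y [E R] [u [[v Hv] Ex]].
exists (gaussM v y); split.
  rewrite E Ex. symmetry. transitivity (gaussM (gaussM u v) (gaussM x y)); first gr.
  by rewrite Hv gM1.
apply: relprime_dvdr (relprime_assoc R _) _; first by exists u; split => //; exists v.
exists u. transitivity (gaussM (gaussM u v) y); first by rewrite Hv gM1. gr.
Qed.

Lemma diamondE x z : diamond x z <-> inA x /\ udiv x z.
Proof. by []. Qed.

Lemma decPE (P : Prop) : Defs.decP P = true <-> P.
Proof. unfold Defs.decP; destruct (ClassicalEpsilon.excluded_middle_informative P); split => //. Qed.

Definition box (z : gauss) : seq gauss :=
  [seq ((a : nat)%:Z, (b : nat)%:Z) | a <- index_iota 0 (gaussN z).+1, b <- index_iota 0 (gaussN z).+1].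

Lemma box_uniq z : uniq (box z).
Proof. apply: allpairs_uniq; try exact: iota_uniq.
move=> [a b] [c d] _ _ /= [h1 h2]. congr pair; lia.
Qed.

Lemma delta_box z : delta2star z =
  (\sum_(x <- box z) (if Defs.decP (diamond x z) then gaussN x else 0))%N.
Proof.
rewrite /delta2star /box big_allpairs_dep /=.
rewrite -(big_mkord xpredT (fun a => \sum_(b < (gaussN z).+1)
   (if Defs.decP (diamond ((a : nat)%:Z, (b : nat)%:Z) z) then gaussN ((a : nat)%:Z, (b : nat)%:Z) else 0))%N).
apply: eq_bigr => a _.
by rewrite -(big_mkord xpredT (fun b => 
   (if Defs.decP (diamond ((a : nat)%:Z, (b : nat)%:Z) z) then gaussN ((a : nat)%:Z, (b : nat)%:Z) else 0))%N).
Qed.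

Lemma box_mem z x : z <> gauss0 -> diamond x z -> x \in box z.
Proof.
move=> z0 [[h1 h2] [y [E _]]].
have Hd : (gaussN x <= gaussN z)%N by apply: gdvd_N z0 _; exists y.
have := gaussNE x; have := gaussNE z. rewrite /Nz => Ez Ex.
have -> : x = ((absz x.1 : nat)%:Z, (absz x.2 : nat)%:Z).
  rewrite [x]gpair /=; congr pair; lia.
apply: allpairs_f; rewrite mem_index_iota; nia.
Qed.

Definition Ulist z := [seq x <- box z | Defs.decP (diamond x z)].

Lemma Ulist_uniq z : uniq (Ulist z). Proof. exact/filter_uniq/box_uniq. Qed.
Lemma Ulist_mem z x : z <> gauss0 -> x \in Ulist z <-> diamond x z.
Proof. move=> z0; rewrite mem_filter; split.
  by case/andP => /decPE. move=> H; rewrite (box_mem z0 H) andbT; exact/decPE. Qed.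

Lemma deltaE z U : z <> gauss0 -> uniq U -> (forall x, x \in U <-> diamond x z) ->
  delta2star z = (\sum_(x <- U) gaussN x)%N.
Proof.
move=> z0 uU HU. rewrite delta_box -big_mkcond -big_filter -/(Ulist z).
apply: perm_big; apply: uniq_perm => //; first exact: Ulist_uniq.
move=> x; apply/idP/idP => H.
- by apply/HU; apply/(Ulist_mem x z0).
- by apply/(Ulist_mem x z0); apply/HU.
Qed.

Section Mult.
Variables (p w : gauss) (e : nat).
Hypotheses (pp : gprime p) (npw : ~ gdvd p w) (e1 : (1 <= e)%N).
Let P := gaussX p e.
Let p0 : p <> gauss0. Proof. by case: pp. Qed.
Let P0 : P <> gauss0. Proof. exact: gX_neq0. Qed.
Let w0 : w <> gauss0. Proof. by move=> w0; apply: npw; rewrite w0; exists gauss0; rewrite gM0. Qed.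
Let RPw : grelprime P w. Proof. exact: prime_relprime. Qed.
Let pP : gdvd p P.
Proof. rewrite /P; case: e e1 => // n _; rewrite gXS; exact: gdvd_mulr. Qed.

Lemma udiv_split x : udiv x (gaussM P w) ->
  (~ gdvd p x /\ udiv x w) \/ (exists d, udiv d w /\ x = gaussM P d).
Proof.
case=> y [E R].
case: (ClassicalEpsilon.excluded_middle_informative (gdvd p x)) => px.
- right. have npy : ~ gdvd p y by move=> py; case: pp => _ [pu _]; apply: pu; exact: R.
  have Ry := prime_relprime (e:=e) pp npy.
  have : gdvd P (gaussM y x) by rewrite gMC -E; exact: gdvd_mulr.
  case/(gauss_lemma Ry) => d Ed. exists d; split => //.
  exists y; split; last by apply: relprime_dvdl R _; rewrite Ed; exact: gdvd_mull.
  apply: (@gcancel P) => //; rewrite E Ed; gr.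
- left; split => //.
  have Rx := prime_relprime (e:=e) pp px.
  have : gdvd P (gaussM x y) by rewrite -E; exact: gdvd_mulr.
  case/(gauss_lemma Rx) => y' Ey. exists y'; split; last by apply: relprime_dvdr R _; rewrite Ey; exact: gdvd_mull.
  apply: (@gcancel P) => //; rewrite E Ey; gr.
Qed.

Lemma udiv_lift1 d : udiv d w -> udiv d (gaussM P w).
Proof. case=> y [E R]. exists (gaussM P y); split; first by rewrite E; gr.
apply: relprime_Mr R. apply: relprime_sym; apply: relprime_dvdr RPw _.
rewrite E; exact: gdvd_mulr. Qed.

Lemma udiv_lift2 d : udiv d w -> udiv (gaussM P d) (gaussM P w).
Proof. case=> y [E R]. exists y; split; first by rewrite E; gr.
apply: relprime_Ml R. apply: relprime_dvdr RPw _. rewrite E; exact: gdvd_mull. Qed.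

Lemma delta_mult : delta2star (gaussM P w) = ((1 + gaussN p ^ e) * delta2star w)%N.
Proof.
have z0 : gaussM P w <> gauss0 by move/(f_equal gaussN); rewrite NM /gaussN /= => /eqP; rewrite muln_eq0 => /orP [] /eqP /N0.
set U := Ulist w. set f := fun d => normA (gaussM P d).
have HU := Ulist_mem (z := w) ^~ w0.
have f0 d : d \in U -> inA (f d) /\ udiv (f d) (gaussM P w) /\ gdvd p (f d).
  move/HU => [dA dw]. have d0 := inA_neq0 dA.
  have Pd0 : gaussM P d <> gauss0 by move/(f_equal gaussN); rewrite NM /gaussN /= => /eqP; rewrite muln_eq0 => /orP [] /eqP /N0.
  split; first exact: normA_inA.
  split; first exact: udiv_assoc (udiv_lift2 dw) (normA_assoc _).
  apply: (gdvd_trans _ (gassoc_dvd (normA_assoc (gaussM P d)))). exact: gdvd_Mr pP.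
rewrite (@deltaE _ (U ++ map f U)) //; last first.
- move=> x; rewrite mem_cat; split.
  + case/orP => [/HU [xA xw]|/mapP [d dU ->]]; last by have [? [? _]] := f0 d dU.
    by split => //; apply: udiv_lift1.
  + move=> [xA xz]. case: (udiv_split xz) => [[_ xw]|[d [dw Ex]]].
      by apply/orP; left; apply/HU.
    apply/orP; right; apply/mapP. have d0 : d <> gauss0 by move=> d0; apply: (inA_neq0 xA); rewrite Ex d0 gM0.
    exists (normA d); first by apply/HU; split; [exact: normA_inA| exact: udiv_assoc dw (normA_assoc _)].
    apply: inA_assoc_eq => //; first by have [] := f0 (normA d) ltac:(by apply/HU; split; [exact: normA_inA| exact: udiv_assoc dw (normA_assoc _)]).
    rewrite /f Ex. apply: gassoc_sym. apply: gassoc_trans (normA_assoc _) _.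
    case: (normA_assoc d) => u [uu Eu].
    exists u; split => //. rewrite Eu; gr.
- rewrite cat_uniq Ulist_uniq /=. apply/andP; split.
  + apply/hasPn => x /mapP [d dU ->]. apply/negP => /HU [_ [y [Ey _]]].
    have [_ [_ pf]] := f0 d dU. apply: npw. rewrite Ey; exact: gdvd_Mr.
  + rewrite map_inj_in_uniq ?Ulist_uniq // => d1 d2 h1 h2 E.
    have [A1 _] := HU d1; have [A2 _] := HU d2.
    apply: inA_assoc_eq; [exact: (A1 h1).1|exact: (A2 h2).1|].
    have : gassoc (gaussM P d1) (gaussM P d2).
      apply: (gassoc_trans (gassoc_sym (normA_assoc (gaussM P d1)))). rewrite -/(f d1) E. exact: normA_assoc.
    case=> u [uu Eu]; exists u; split => //. apply: (@gcancel P) => //. rewrite Eu; gr.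
rewrite big_cat big_map /= (deltaE w0 (Ulist_uniq w) HU) mulnDl mul1n; congr addn.
rewrite big_distrr /=; apply: eq_bigr => d _. by rewrite /f normA_N NM NX.
Qed.
End Mult.

Lemma delta_unit z : gunit z -> delta2star z = 1%N.
Proof.
move=> zu. have z0 : z <> gauss0 by move=> z0; move: zu; rewrite z0 => /gunitN.
rewrite (@deltaE z [:: gauss1]) ?big_seq1 //.
move=> x; rewrite inE; split.
- move/eqP ->; split; first by split.
  exists z; split; [by rewrite gM1 | exact: relprime1].
- move=> [xA [y [E _]]]. apply/eqP; apply: inA_assoc_eq => //.
  have xu : gunit x by apply: gdvd_unit zu _; rewrite E; exact: gdvd_mulr.
  by exists x; split => //; rewrite gMr1.
Qed.

Lemma parity (a : int) : exists a' r, a = 2 * a' + r /\ (r = 0 \/ r = 1).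
Proof. exists (a %/ 2)%Z, (a %% 2)%Z.
have E := divz_eq a 2. have h1 : 0 <= (a %% 2)%Z by apply: modz_ge0.
have h2 : (a %% 2)%Z < 2 by apply: ltz_pmod. split; lia. Qed.

Lemma odd_norm4 x : odd (gaussN x) -> exists m, gaussN x = (4 * m + 1)%N.
Proof.
move=> H. have E := gaussNE x. rewrite /Nz in E.
have [a [ra [Ea Ra]]] := parity x.1. have [b [rb [Eb Rb]]] := parity x.2.
have [k Hk] : exists k, gaussN x = (k.*2 + 1)%N by exists (gaussN x)./2; rewrite -[in LHS](odd_double_half (gaussN x)) H addnC.
exists (absz (a*a + a*ra + b*b + b*rb)).
have : (ra + rb = 1) by case: Ra => Ra; case: Rb => Rb; subst; move: E; rewrite Hk; lia.
move=> Hr. apply/eqP; rewrite -eqz_nat E Ea Eb. apply/eqP. 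
have Hp : 0 <= a*a + a*ra + b*b + b*rb by case: Ra => Ra; case: Rb => Rb; subst; nia.
rewrite PoszD PoszM gez0_abs //.
case: Ra => Ra; case: Rb => Rb; subst; move: Hr; lia.
Qed.

Lemma even_half z : ~~ odd (gaussN z) -> exists z', z = gaussM one_plus_i z'.
Proof.
move=> H. have E := gaussNE z. rewrite /Nz in E.
have [a [ra [Ea Ra]]] := parity z.1. have [b [rb [Eb Rb]]] := parity z.2.
have [k Hk] : exists k, gaussN z = k.*2 by exists (gaussN z)./2; rewrite -[in LHS](odd_double_half (gaussN z)) (negbTE H).
have Hr : ra = rb by case: Ra => Ra; case: Rb => Rb; subst; move: E; rewrite Hk; lia.
exists (a + b + ra, b - a). rewrite [z]gpair Ea Eb -Hr /gaussM /one_plus_i /=; congr pair; ring.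
Qed.

Lemma N1i : gaussN one_plus_i = 2%N. Proof. by []. Qed.

Lemma decomp_aux n z : (gaussN z <= n)%N -> z <> gauss0 ->
  exists gamma x, z = gaussM (gaussX one_plus_i gamma) x /\ odd (gaussN x).
Proof.
elim: n z => [|n IH] z Hz z0; first by exfalso; apply: z0; apply: N0; lia.
case: (boolP (odd (gaussN z))) => Ho.
  by exists 0%N, z; rewrite gX0 gM1.
have [z' Ez] := even_half Ho.
have Nz' : gaussN z = (2 * gaussN z')%N by rewrite Ez NM N1i.
have z'0 : z' <> gauss0 by move=> h; apply: z0; rewrite Ez h gM0.
have : gaussN z' <> 0%N by move/N0.
move=> h. have [g [x [Ex Hx]]] := IH z' ltac:(lia) z'0.
exists g.+1, x; split => //. rewrite Ez Ex gXS; gr.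
Qed.

Lemma maxpow_aux n p z : (gaussN z <= n)%N -> gprime p -> z <> gauss0 ->
  exists e w, z = gaussM (gaussX p e) w /\ ~ gdvd p w.
Proof.
elim: n z => [|n IH] z Hz pp z0; first by exfalso; apply: z0; apply: N0; lia.
case: (ClassicalEpsilon.excluded_middle_informative (gdvd p z)) => pz; last first.
  by exists 0%N, z; rewrite gX0 gM1.
case: pz => z' Ez.
have z'0 : z' <> gauss0 by move=> h; apply: z0; rewrite Ez h gM0.
have := prime_N2 pp. have : gaussN z' <> 0%N by move/N0.
have : gaussN z = (gaussN p * gaussN z')%N by rewrite Ez NM.
move=> h1 h2 h3.
have [e [w [Ew Hw]]] := IH z' ltac:(nia) pp z'0.
exists e.+1, w; split => //. rewrite Ez Ew gXS; gr.
Qed.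

Lemma odd_pow_half n e : odd n -> (exists m, n = 4 * m + 1)%N -> exists o, (1 + n ^ e = 2 * o)%N /\ odd o.
Proof.
move=> _ [m ->].
have : ((4 * m + 1) ^ e %% 4 = 1)%N.
  have h : ((4 * m + 1) %% 4 = 1)%N by lia.
  by rewrite -modnXm h exp1n.
move=> H. exists (((4 * m + 1) ^ e) %/ 4 * 2 + 1)%N. split.
  rewrite {1}(divn_eq ((4 * m + 1) ^ e) 4) H. lia.
by rewrite addn1 /= oddM andbF.
Qed.

Definition Qprop (z : gauss) (s : seq gauss) (m : nat) :=
  [/\ delta2star z = (2 ^ size s * m)%N, odd m,
   (forall q, q \in s -> [/\ gprime q, gdvd q z & odd (gaussN q)]),
   (forall i j, (i < size s)%N -> (j < size s)%N -> i <> j ->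
        ~ gassoc (nth gauss0 s i) (nth gauss0 s j)) &
   (forall q, gprime q -> gdvd q z -> odd (gaussN q) -> exists2 r, r \in s & gassoc q r)].

Lemma Qz_aux n z : (gaussN z <= n)%N -> z <> gauss0 -> exists s m, Qprop z s m.
Proof.
elim: n z => [|n IH] z Hz z0; first by exfalso; apply: z0; apply: N0; lia.
case: (ClassicalEpsilon.excluded_middle_informative (gunit z)) => zu.
  exists [::], 1%N; split => //; first by rewrite delta_unit.
  by move=> q [_ [qu _]] qz; exfalso; apply: qu; apply: gdvd_unit zu qz.
have [p [pp pz]] := exists_prime z0 zu.
have [e [w [Ez npw]]] := maxpow_aux (leqnn _) pp z0.
have e1 : (1 <= e)%N.
  case: e Ez => // Ez; exfalso; apply: npw; rewrite gX0 gM1 in Ez; by rewrite -Ez.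
have w0 : w <> gauss0 by move=> h; apply: z0; rewrite Ez h gM0.
have Nw : (gaussN w <= n)%N.
  have := prime_N2 pp. have : gaussN w <> 0%N by move/N0.
  have : gaussN z = (gaussN p ^ e * gaussN w)%N by rewrite Ez NM NX.
  move=> h1 h2 h3. have : (2 <= gaussN p ^ e)%N.
    have h4 : (0 < gaussN p)%N by lia. apply: leq_trans h3 _. by rewrite -{1}(expn1 (gaussN p)) leq_pexp2l.
  nia.
have [s [m [Hd Hm Hs Hn Hc]]] := IH w Nw w0.
have Dz : delta2star z = ((1 + gaussN p ^ e) * delta2star w)%N by rewrite Ez delta_mult.
have wz : gdvd w z by rewrite Ez; exact: gdvd_mull.
have cov q : gprime q -> gdvd q z -> gdvd q w \/ gassoc q p.
  move=> qp; rewrite Ez => /(proj2 (proj2 qp)) [/(prime_dvd_X qp)/(prime_dvd_prime pp qp) H|]; by auto.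
case: (boolP (odd (gaussN p))) => Hp.
- have [o [Ho oo]] := odd_pow_half e Hp (odd_norm4 Hp).
  exists (p :: s), (o * m)%N; split.
  + by rewrite Dz Ho Hd /= expnS; lia.
  + by rewrite oddM oo.
  + move=> q; rewrite inE => /orP [/eqP ->|qs] //.
    by have [? ? ?] := Hs q qs; split => //; apply: gdvd_trans wz.
  + have np q : q \in s -> ~ gassoc p q.
      move=> qs /gassoc_sym /gassoc_dvd pq. apply: npw.
      by have [_ ? _] := Hs q qs; apply: gdvd_trans pq _.
    move=> [|i] [|j] //= hi hj hij.
    * by apply: np; apply: mem_nth.
    * by move/gassoc_sym; apply: np; apply: mem_nth.
    * apply: Hn => //; by move=> h; apply: hij; rewrite h.
  + move=> q qp qz qo. case: (cov q qp qz) => [qw|qa].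
      by have [r rs ra] := Hc q qp qw qo; exists r => //; rewrite inE rs orbT.
    by exists p => //; rewrite inE eqxx.
- exists s, ((1 + gaussN p ^ e) * m)%N; split.
  + by rewrite Dz Hd; lia.
  + rewrite oddM Hm andbT addnC addn1 /= oddX (negbTE Hp) orbF; by case: e {Ez Dz} e1.
  + by move=> q qs; have [? ? ?] := Hs q qs; split => //; apply: gdvd_trans wz.
  + exact: Hn.
  + move=> q qp qz qo. case: (cov q qp qz) => [qw|qa]; first exact: Hc.
    by exfalso; move: qo; rewrite (gassoc_N qa) (negbTE Hp).
Qed.

Theorem theorem2p3 (z : gauss) (t : nat) :
  z <> gauss0 -> (2 <= t)%N -> I2star z = t%:R ->
  (exists (gamma : nat) (x : gauss),
      z = gaussM (gaussX one_plus_i gamma) x /\ odd (gaussN x)) /\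
  (forall (gamma : nat) (x : gauss),
      z = gaussM (gaussX one_plus_i gamma) x -> odd (gaussN x) ->
      num_prime_divisors x (gamma + logn 2 t)).
Proof.
move=> z0 t2 HI. split; first exact: (decomp_aux (leqnn _) z0).
move=> g x Ez Hx.
have Nz0 : gaussN z <> 0%N by move/N0.
have Dt : delta2star z = (t * gaussN z)%N.
  apply/eqP; rewrite -(eqr_nat rat) natrM -HI /I2star mulfVK //.
  by rewrite pnatr_eq0; apply/eqP.
have [s [m [Hd Hm Hs Hn Hc]]] := Qz_aux (leqnn _) z0.
have NzE : gaussN z = (2 ^ g * gaussN x)%N by rewrite Ez NM NX N1i.
have Hsz : size s = (g + logn 2 t)%N.
  have m0 : (0 < m)%N by case: m {Hd} Hm.
  have x0 : (0 < gaussN x)%N by move: Hx; case: (gaussN x).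
  have H : (t * (2 ^ g * gaussN x) = 2 ^ size s * m)%N by rewrite -NzE -Dt.
  have := congr1 (logn 2) H.
  rewrite !lognM ?expn_gt0 ?muln_gt0 //; try lia.
  rewrite !pfactorK // !(@logn_coprime 2 (gaussN x)) ?(@logn_coprime 2 m) ?coprime2n //. lia.
exists s; split => //; split; [|split; [exact: Hn|]].
- move=> q qs. have [qp qz qo] := Hs q qs. split => //.
  move: qz; rewrite Ez => /(proj2 (proj2 qp)) [|//].
  move/(prime_dvd_X qp)/gdvd_Ndvd; rewrite N1i => H.
  have := prime_N2 qp. have : gaussN q <> 2%N by move=> h; move: qo; rewrite h.
  move: H; rewrite dvdn_divisors // !inE => /orP [/eqP ->|/eqP ->] //.
- move=> q qp qx. apply: Hc => //.
    by rewrite Ez; apply: gdvd_Ml.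
  have := gdvd_Ndvd qx. case: (boolP (odd (gaussN q))) => // Hq /dvdn_odd.
  by rewrite Hx (negbTE Hq) => /(_ isT).
Qed.
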